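(* Assume (R). For every $n\ge0$, $$A_n(x)=(2x-1)^{\delta_n}\,F_n\big(x(x-1)\big).$$ Moreover $f_{n,0}=(-1)^n\alpha_n$ and $f_{n,d_n}=2^{-\delta_n}\alpha_0$; furthermore $$A_n(\phi)=(\sqrt5)^{\delta_n}F_n(1),\qquad \sum_{\nu=0}^{n}\binom{n}{\nu}\alpha_{n-\nu}\Phi_\nu=\begin{cases}2F_n(1),& n\text{ odd},\\ 0,& n\text{ even}.\end{cases}$$
   Context: Let $(\alpha_n)_{n\ge0}$ be an arbitrary sequence of complex numbers with Appell polynomials $A_n(x)=\sum_{\nu=0}^{n}\binom{n}{\nu}\alpha_{n-\nu}x^\nu$; property (R) means $A_n(1-x)=(-1)^nA_n(x)$ for all $n\ge0$. Let $S_n(x)=\sum_{k=0}^n s_{n,k}x^k$ with $s_{n,k}=\sum_{\nu=k}^{n}\binom{n}{\nu}\binom{\nu}{k}\alpha_\nu$. For $n\ge0$ let $d_n=\lfloor n/2\rfloor$, $\delta_n=1$ if $n$ odd and $0$ otherwise. The Faulhaber-type polynomial is $F_n(u)=\sum_{k\ge0}f_{n,k}u^k$ with $f_{n,k}=2^{2k-n}\sum_{\nu=0}^{d_n-k}\binom{n}{2\nu}\binom{d_n-\nu}{k}S_{2\nu}(1)$ for $0\le k\le d_n$ and $f_{n,k}=0$ for $k>d_n$. $\phi=(1+\sqrt5)/2$ is the golden ratio and $\Phi_\nu=(\phi^\nu-(1-\phi)^\nu)/\sqrt5$ are the Fibonacci numbers. *)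

(* Defs.v *)
From mathcomp Require Import all_boot all_order all_algebra.
From mathcomp Require Import complex reals.
Set Implicit Arguments. Unset Strict Implicit. Unset Printing Implicit Defensive.
Import Order.TTheory GRing.Theory Num.Theory.
Local Open Scope ring_scope.
Local Open Scope complex_scope.

Section Defs.
Variable R : realType.
Local Notation C := (R[i]).
Variable alpha : nat -> C.

Definition appA (n : nat) (x : C) : C :=
  \sum_(nu < n.+1) ('C(n, nu))%:R * alpha (n - nu)%N * x ^+ nu.

Definition propR : Prop :=
  forall (n : nat) (x : C), appA n (1 - x) = (-1) ^+ n * appA n x.

Definition s_coef (n k : nat) : C :=
  \sum_(k <= nu < n.+1) ('C(n, nu) * 'C(nu, k))%:R * alpha nu.

Definition S_poly (n : nat) (x : C) : C :=
  \sum_(k < n.+1) s_coef n k * x ^+ k.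

Definition d_ (n : nat) : nat := n./2.
Definition delta (n : nat) : nat := odd n.

Definition f_coef (n k : nat) : C :=
  if (k <= d_ n)%N then
    (2%:R : C) ^ ((2 * k)%N%:Z - n%:Z)%R *
    \sum_(nu < (d_ n - k)%N.+1)
        ('C(n, (2 * nu)%N) * 'C((d_ n - nu)%N, k))%:R * S_poly (2 * nu)%N 1
  else 0.

Definition F_poly (n : nat) (u : C) : C :=
  \sum_(k < (d_ n).+1) f_coef n k * u ^+ k.

End Defs.

Definition sqrt5 (R : realType) : R[i] := (Num.sqrt (5%:R : R))%:C.
Definition goldphi (R : realType) : R[i] := ((1 + Num.sqrt (5%:R : R)) / 2%:R)%:C.
Definition Fib (R : realType) (nu : nat) : R[i] :=
  (goldphi R ^+ nu - (1 - goldphi R) ^+ nu) / sqrt5 R.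

(* Main.v *)
Require Import Defs.
From mathcomp Require Import all_boot all_order all_algebra.
From mathcomp Require Import complex reals.
From mathcomp Require Import ring zify.
Import Order.TTheory GRing.Theory Num.Theory.
Local Open Scope ring_scope.

Lemma sum_ext (V : zmodType) k N (F : nat -> V) : (k <= N)%N ->
  (forall i, (k < i <= N)%N -> F i = 0) ->
  \sum_(i < k.+1) F i = \sum_(i < N.+1) F i.
Proof.
move=> kN H; rewrite -!(big_mkord xpredT) [RHS](big_cat_nat _ (n:=k.+1)) //=.
rewrite [X in _ + X]big1_seq ?addr0 // => i /andP[_].
by rewrite mem_index_iota => /andP[] ? ?; apply: H; apply/andP; split.
Qed.

Local Open Scope nat_scope.
Lemma binA n m l : ('C(n,l) * 'C(n-l,m) = 'C(n,m) * 'C(n-m,l))%N.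
Proof.
case: (leqP (m + l)%N n) => H; last first.
  case: (leqP l n)%N => Hl; last by rewrite (@bin_small n l) // mul0n (@bin_small (n-m) l) ?muln0 //; lia.
  rewrite (@bin_small (n-l) m); last by lia.
  rewrite muln0; case: (leqP m n) => Hm; last by rewrite (@bin_small n m).
  by rewrite (@bin_small (n-m) l) ?muln0 //; lia.
apply/eqP; rewrite -(@eqn_pmul2r (l`! * m`! * (n - l - m)`!)); last by rewrite !muln_gt0 !fact_gt0.
have e1 : (n - l - m = n - m - l)%N by lia.
have -> : ('C(n, l) * 'C(n - l, m) * (l`! * m`! * (n - l - m)`!) =
   'C(n, l) * (l`! * ('C(n - l, m) * (m`! * (n - l - m)`!))))%N by ring.
rewrite bin_fact; last by lia.
rewrite bin_fact; last by lia.
have -> : ('C(n, m) * 'C(n - m, l) * (l`! * m`! * (n - l - m)`!) =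
   'C(n, m) * (m`! * ('C(n - m, l) * (l`! * (n - m - l)`!))))%N by rewrite e1; ring.
rewrite bin_fact; last by lia.
by rewrite bin_fact //; lia.
Qed.
Local Open Scope ring_scope.

Lemma appA_rev (R : realType) (alpha : nat -> R[i]) n x :
  appA alpha n x = \sum_(m < n.+1) ('C(n,m))%:R * alpha m * x ^+ (n - m).
Proof.
rewrite /appA (reindex_inj rev_ord_inj) /=; apply: eq_bigr => i _.
have hi : (i <= n)%N by rewrite -ltnS.
by rewrite subSS bin_sub // subKn.
Qed.

Lemma appA_shift (R : realType) (alpha : nat -> R[i]) n x h :
  appA alpha n x = \sum_(j < n.+1) ('C(n,j))%:R * appA alpha j h * (x - h) ^+ (n - j).
Proof.
set y := x - h.
have Ex : x = h + y by rewrite /y addrC subrK.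
pose G (m l : nat) := (('C(n,m) * 'C(n-m,l))%N)%:R * alpha m * (h ^+ (n-m-l) * y ^+ l).
transitivity (\sum_(m < n.+1) \sum_(l < n.+1) G m l).
  rewrite appA_rev; apply: eq_bigr => m _; rewrite {1}Ex exprDn.
  rewrite -(@sum_ext _ (n - m) n (G m)); last 2 first.
  - exact: leq_subr.
  - by move=> l /andP[hl _]; rewrite /G (@bin_small (n-m) l) // muln0 !mul0r.
  rewrite mulr_sumr; apply: eq_bigr => l _; rewrite /G natrM -mulr_natr; ring.
pose H (j m : nat) := ((('C(n,j) * 'C(j,m))%N)%:R * alpha m * (h ^+ (j-m) * y ^+ (n-j))).
symmetry; transitivity (\sum_(j < n.+1) \sum_(m < n.+1) H j m).
  apply: eq_bigr => j _; rewrite appA_rev.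
  rewrite -(@sum_ext _ j n (H j)); last 2 first.
  - by rewrite -ltnS.
  - by move=> m /andP[hm _]; rewrite /H (@bin_small j m) // muln0 !mul0r.
  rewrite mulr_sumr mulr_suml; apply: eq_bigr => m _; rewrite /H natrM; ring.
rewrite exchange_big /=; apply: eq_bigr => m _.
rewrite (reindex_inj rev_ord_inj) /=; apply: eq_bigr => l _.
have hl : (l <= n)%N by rewrite -ltnS.
rewrite subSS /H /G subKn // bin_sub // binA.
by rewrite /H (subnAC n l m).
Qed.

Lemma sum_even (V : zmodType) (g : nat -> V) n :
  (forall j, odd j -> g j = 0) ->
  \sum_(j < n.+1) g j = \sum_(v < (n./2).+1) g (2 * v)%N.
Proof.
move=> Hg; elim: n => [|n IH]; first by rewrite !big_ord1.
rewrite big_ord_recr /= IH uphalf_half.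
have := odd_double_half n; rewrite -muln2.
case Hn: (odd n) => /= E.
- rewrite add1n [RHS]big_ord_recr /=; congr (_ + g _); lia.
- by rewrite Hg ?addr0 //= Hn.
Qed.

Lemma two_neq0 (R : realType) : (2%:R : R[i]) != 0.
Proof. by rewrite pnatr_eq0. Qed.

Lemma S_poly1 (R : realType) (alpha : nat -> R[i]) m :
  S_poly alpha m 1 = 2%:R ^+ m * appA alpha m (2%:R)^-1.
Proof.
have t0 := two_neq0 R.
pose T (nu k : nat) : R[i] := (('C(m,nu) * 'C(nu,k))%N)%:R * alpha nu.
transitivity (\sum_(k < m.+1) \sum_(nu < m.+1) T nu k).
  rewrite /S_poly; apply: eq_bigr => k _; rewrite expr1n mulr1 /s_coef.
  rewrite -(big_mkord xpredT (T ^~ k)) [RHS](big_cat_nat _ (n:=k)) //=; last by apply: ltnW.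
  rewrite [X in _ = X + _]big1_seq ?add0r // => nu /andP[_].
  by rewrite mem_index_iota => /andP[_ h]; rewrite /T (@bin_small nu k) // muln0 mul0r.
rewrite exchange_big appA_rev mulr_sumr; apply: eq_bigr => nu _.
have hnu : (nu <= m)%N by rewrite -ltnS.
pose B (k : nat) : R[i] := ('C(nu,k))%:R.
transitivity (('C(m,nu))%:R * alpha nu * \sum_(k < m.+1) B k).
  by rewrite mulr_sumr; apply: eq_bigr => k _; rewrite /T /B natrM; ring.
rewrite -(@sum_ext _ nu m B) //; last first.
  by move=> k /andP[hk _]; rewrite /B bin_small.
have -> : \sum_(k < nu.+1) B k = 2%:R ^+ nu.
  rewrite -[2%:R]/(1 + 1 : R[i]) exprDn; apply: eq_bigr => k _.
  by rewrite /B !expr1n mul1r.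
have -> : (2%:R : R[i]) ^+ m = 2%:R ^+ nu * 2%:R ^+ (m - nu) by rewrite -exprD subnKC.
rewrite exprVn.
field; exact: expf_neq0.
Qed.

Lemma odd_vanish (R : realType) (alpha : nat -> R[i]) : propR alpha ->
  forall j, odd j -> appA alpha j (2%:R)^-1 = 0.
Proof.
move=> HR j oj; have t0 := two_neq0 R.
have := HR j (2%:R)^-1.
have -> : 1 - (2%:R : R[i])^-1 = (2%:R)^-1 by field.
rewrite -signr_odd oj expr1 => E.
have : appA alpha j (2%:R)^-1 * 2%:R = 0 by rewrite mulr_natr mulr2n {1}E; ring.
by move/eqP; rewrite mulf_eq0 (negbTE t0) orbF => /eqP.
Qed.

Lemma two_powz (R : realType) (k n : nat) :
  (2%:R : R[i]) ^ ((2 * k)%N%:Z - n%:Z) = 2%:R ^+ (2 * k) / 2%:R ^+ n.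
Proof.
by rewrite expfzDr ?two_neq0 // -exprnN.
Qed.

Lemma claim1 (R : realType) (alpha : nat -> R[i]) : propR alpha ->
  forall n x, appA alpha n x = (2%:R * x - 1) ^+ delta n * F_poly alpha n (x * (x - 1)).
Proof.
move=> HR n x; have t0 := two_neq0 R.
set h : R[i] := (2%:R)^-1.
set y := x - h. set u := x * (x - 1). set q : R[i] := (2%:R * 2%:R)^-1.
set d := d_ n. set b := delta n.
have En : n = (b + 2 * d)%N by have := odd_double_half n; rewrite -muln2 /b /d /delta /d_; lia.
have Hy2 : y ^+ 2 = q + u by rewrite /y /h /q /u; field.
have Hx : 2%:R * x - 1 = 2%:R * y by rewrite /y /h; field.
pose a j := appA alpha j h.
pose P (v k : nat) : R[i] := ('C(n, 2 * v))%:R * a (2 * v)%N * y ^+ b *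
   (q ^+ (d - v - k) * u ^+ k *+ 'C(d - v, k)).
transitivity (\sum_(v < d.+1) \sum_(k < d.+1) P v k).
  rewrite (appA_shift _ _ _ _ h).
  rewrite (@sum_even _ (fun j => ('C(n, j))%:R * appA alpha j h * (x - h) ^+ (n - j))); last first.
    by move=> j oj; rewrite odd_vanish // mulr0 mul0r.
  apply: eq_bigr => v _.
  have hv : (v <= d)%N by rewrite -ltnS.
  rewrite -(@sum_ext _ (d - v) d (P v)); last 2 first.
  - exact: leq_subr.
  - by move=> k /andP[hk _]; rewrite /P (@bin_small (d - v) k) // mulr0n mulr0.
  have -> : (n - 2 * v = b + 2 * (d - v))%N by lia.
  rewrite -/y exprD exprM Hy2 (exprDn q u) /P -mulr_sumr /a; ring.
rewrite /F_poly -/d mulr_sumr.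
pose Q (k v : nat) : R[i] := (('C(n, 2 * v) * 'C(d - v, k))%N)%:R * S_poly alpha (2 * v) 1.
transitivity (\sum_(k < d.+1) \sum_(v < d.+1)
   ((2%:R * x - 1) ^+ b * (2%:R ^ ((2 * k)%N%:Z - n%:Z) * Q k v * u ^+ k))); last first.
  apply: eq_bigr => k _.
  have hk : (k <= d)%N by rewrite -ltnS.
  rewrite /f_coef -/d hk (@sum_ext _ (d - k) d (Q k)); last 2 first.
  - exact: leq_subr.
  - by move=> v /andP[hv1 hv2]; rewrite /Q (@bin_small (d - v) k) ?muln0 ?mul0r //; lia.
  by rewrite mulr_sumr mulr_suml mulr_sumr; apply: eq_bigr => v _; ring.
rewrite exchange_big /=; apply: eq_bigr => k _; apply: eq_bigr => v _.
have hv : (v <= d)%N by rewrite -ltnS.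
have hk : (k <= d)%N by rewrite -ltnS.
rewrite /P /Q.
case: (leqP k (d - v)) => hkv; last first.
  by rewrite (@bin_small (d - v) k) // muln0 mulr0n !(mulr0, mul0r).
rewrite S_poly1 -/h -/(a _) Hx two_powz.
set K := (d - v - k)%N.
have Ed : d = (v + k + K)%N by rewrite /K; lia.
have -> : (2%:R : R[i]) ^+ n = 2%:R ^+ b * 2%:R ^+ v * 2%:R ^+ v * 2%:R ^+ k * 2%:R ^+ k * 2%:R ^+ K * 2%:R ^+ K.
  by rewrite -!exprD; congr (_ ^+ _); lia.
have -> : (2%:R : R[i]) ^+ (2 * k) = 2%:R ^+ k * 2%:R ^+ k by rewrite -exprD; congr (_ ^+ _); lia.
have -> : (2%:R : R[i]) ^+ (2 * v) = 2%:R ^+ v * 2%:R ^+ v by rewrite -exprD; congr (_ ^+ _); lia.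
have -> : q ^+ K = (2%:R ^+ K * 2%:R ^+ K)^-1 by rewrite /q exprVn exprMn.
rewrite [(_ * y) ^+ b]exprMn natrM -[_ *+ 'C(d - v, k)]mulr_natr /a -/h.
field.
by rewrite !expf_neq0.
Qed.

Lemma sqrt5_sq (R : realType) : sqrt5 R ^+ 2 = 5%:R.
Proof.
rewrite /sqrt5 -rmorphXn sqr_sqrtr ?ler0n //.
by rewrite rmorph_nat.
Qed.

Lemma sqrt5_neq0 (R : realType) : sqrt5 R != 0.
Proof.
apply/negP => /eqP e; have := sqrt5_sq R; rewrite e expr0n /= => /eqP.
by rewrite eq_sym pnatr_eq0.
Qed.

Lemma phi_u (R : realType) : goldphi R * (goldphi R - 1) = 1.
Proof.
have s2 : Num.sqrt (5%:R : R) ^+ 2 = 5%:R by rewrite sqr_sqrtr ?ler0n.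
rewrite /goldphi -(rmorph1 (real_complex R)) -rmorphB -rmorphM; congr (real_complex R _).
set s := Num.sqrt (5%:R : R).
have -> : (1 + s) / 2%:R * ((1 + s) / 2%:R - 1) = (s ^+ 2 - 1) / 4%:R.
  by field.
by rewrite /s s2; field.
Qed.

Lemma phi_2 (R : realType) : 2%:R * goldphi R - 1 = sqrt5 R.
Proof.
rewrite /goldphi /sqrt5 -(rmorph_nat (real_complex R) 2) -(rmorph1 (real_complex R)) -rmorphM -rmorphB.
by congr (real_complex R _); field.
Qed.

Theorem mainTheorem13 (R : realType) (alpha : nat -> R[i]) :
  propR alpha ->
  [/\ (forall (n : nat) (x : R[i]),
         appA alpha n x = (2%:R * x - 1) ^+ delta n * F_poly alpha n (x * (x - 1))),
      (forall n : nat, f_coef alpha n 0 = (-1) ^+ n * alpha n),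
      (forall n : nat, f_coef alpha n (d_ n) = (2%:R ^+ delta n)^-1 * alpha 0%N),
      (forall n : nat, appA alpha n (goldphi R) = sqrt5 R ^+ delta n * F_poly alpha n 1)
    & (forall n : nat,
         \sum_(nu < n.+1) ('C(n, nu))%:R * alpha (n - nu)%N * Fib R nu
         = if odd n then 2%:R * F_poly alpha n 1 else 0)].
Proof.
move=> HR; have C1 := claim1 _ _ HR.
have C4 : forall n, appA alpha n (goldphi R) = sqrt5 R ^+ delta n * F_poly alpha n 1.
  by move=> n; rewrite C1 phi_u phi_2.
split => //.
- move=> n; have := C1 n 0.
  rewrite /appA big_ord_recl /= big1 => [|i _]; last by rewrite expr0n /= mulr0.
  rewrite /F_poly big_ord_recl /= big1 => [|i _]; last by rewrite mul0r expr0n /= mulr0.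
  rewrite !addr0 !expr0 !mulr1 bin0 subn0 mul1r mulr0 sub0r /delta signr_odd => ->.
  by rewrite mulrA -expr2 sqrr_sign mul1r.
- move=> n; rewrite /f_coef leqnn subnn big_ord1 /= muln0 bin0 subn0 binn.
  rewrite two_powz /S_poly big_ord1 /= /s_coef big_nat1 /= mulr1.
  have En : n = (delta n + 2 * d_ n)%N by have := odd_double_half n; rewrite -muln2 /delta /d_; lia.
  rewrite {2}En exprD; have t0 := two_neq0 R.
  rewrite (_ : binomial 0 0 = 1%N) // (_ : muln 1 1 = 1%N) // !mul1r.
  field; by rewrite !expf_neq0.
- move=> n.
  have -> : \sum_(nu < n.+1) ('C(n, nu))%:R * alpha (n - nu)%N * Fib R nu =
     (appA alpha n (goldphi R) - appA alpha n (1 - goldphi R)) / sqrt5 R.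
    by rewrite /appA -sumrB mulr_suml; apply: eq_bigr => nu _; rewrite /Fib; ring.
  rewrite HR C4 /delta -signr_odd; have s0 := sqrt5_neq0 R.
  by case: (odd n) => /=; field.
Qed.
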